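(* Every weakly Rayleigh set-system $\mathcal{Q}\subseteq 2^E$ ($E$ finite) is convex.
   Context: For $\omega:2^E\to[0,\infty)$ not identically zero, $Z(\omega;\mathbf{y})=\sum_S\omega(S)\prod_{e\in S}y_e$; with subscripts denoting partial derivatives, $Z$ is Rayleigh if $Z_eZ_f-Z_{ef}Z\ge0$ for all distinct $e,f$ and all positive $\mathbf{y}$. $\mathcal{Q}$ is weakly Rayleigh if some $\omega\ge0$ with $\{S:\omega(S)>0\}=\mathcal{Q}$ has $Z(\omega;\mathbf{y})$ Rayleigh. $\mathcal{Q}$ is convex if $S\subseteq T\subseteq S'$ with $S,S'\in\mathcal{Q}$ implies $T\in\mathcal{Q}$. *)

(* Defs.v *)
From HB Require Import structures.
From mathcomp Require Import all_boot all_order all_algebra.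
From mathcomp Require Import multinomials.mpoly.
Set Implicit Arguments. Unset Strict Implicit. Unset Printing Implicit Defensive.
Import Order.TTheory GRing.Theory Num.Theory.
Local Open Scope ring_scope.

(* Ground set E = 'I_n (any finite set, up to relabelling). *)

Definition Zpoly (R : realFieldType) (n : nat) (omega : {set 'I_n} -> R)
  : {mpoly R[n]} :=
  \sum_(S : {set 'I_n}) omega S *: \prod_(e in S) 'X_e.

Definition rayleigh (R : realFieldType) (n : nat) (Z : {mpoly R[n]}) : Prop :=
  forall (e f : 'I_n), e != f ->
  forall y : 'I_n -> R, (forall i, 0 < y i) ->
    0 <= (Z^`M(e)).@[y] * (Z^`M(f)).@[y] - ((Z^`M(e))^`M(f)).@[y] * Z.@[y].

Definition weakly_rayleigh (R : realFieldType) (n : nat) (Q : {set {set 'I_n}}) : Prop :=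
  exists omega : {set 'I_n} -> R,
    (forall S, 0 <= omega S) /\ (exists S, omega S != 0) /\
    (forall S, (0 < omega S) <-> S \in Q) /\
    rayleigh (Zpoly omega).

Definition convex_system (n : nat) (Q : {set {set 'I_n}}) : Prop :=
  forall S T S' : {set 'I_n}, S \in Q -> S' \in Q -> S \subset T -> T \subset S' ->
    T \in Q.

(* Main.v *)
Require Import Defs.
From mathcomp Require Import all_boot all_order all_algebra.
From mathcomp Require Import multinomials.mpoly.
From mathcomp Require Import ring.
From mathcomp Require Import reals.
Set Implicit Arguments. Unset Strict Implicit. Unset Printing Implicit Defensive.
Import Order.TTheory GRing.Theory Num.Theory.
Local Open Scope ring_scope.

Section Aux.
Variables (R : realFieldType) (n : nat).

Definition mon (S : {set 'I_n}) : {mpoly R[n]} := \prod_(j in S) 'X_j.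

Lemma mderivXi (i j : 'I_n) : ('X_j : {mpoly R[n]})^`M(i) = (j == i)%:R.
Proof.
rewrite mderivX mnm1E; case: eqP => [->|_]; last by rewrite scale0r.
have -> : (U_(i) - U_(i))%MM = 0%MM by apply/mnmP => k; rewrite mnmBE subnn mnm0E.
by rewrite mpolyX0 scale1r.
Qed.

Lemma mon_deriv0 (i : 'I_n) (S : {set 'I_n}) : i \notin S -> (mon S)^`M(i) = 0.
Proof.
move=> iS; rewrite /mon; apply: (big_ind (fun p : {mpoly R[n]} => p^`M(i) = 0)).
- by rewrite -mpolyC1 mderivC.
- by move=> x y hx hy; rewrite mderivM hx hy mul0r mulr0 addr0.
- move=> j jS; rewrite mderivXi; case: eqP => // eji.
  by move: iS; rewrite -eji jS.
Qed.

Lemma mon_deriv (i : 'I_n) (S : {set 'I_n}) : i \in S -> (mon S)^`M(i) = mon (S :\ i).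
Proof.
move=> iS; rewrite /mon (big_setD1 _ iS) /= mderivM mderivXi eqxx.
rewrite (mon_deriv0 (S := S :\ i)) ?mul1r ?mulr0 ?addr0 //.
by rewrite !inE eqxx.
Qed.

Lemma mon_eval (v : 'I_n -> R) (S : {set 'I_n}) : (mon S).@[v] = \prod_(j in S) v j.
Proof. rewrite /mon rmorph_prod; by apply: eq_bigr => j _; apply: mevalXU. Qed.

Definition P (v : 'I_n -> R) (S : {set 'I_n}) := \prod_(j in S) v j.

Lemma evalZ (w : {set 'I_n} -> R) (v : 'I_n -> R) :
  (Zpoly w).@[v] = \sum_S w S * P v S.
Proof.
rewrite /Zpoly (big_morph _ (@mevalD _ _ v) (@meval0 _ _ v)); apply: eq_bigr => S _.
by rewrite mevalZ -/(mon S) mon_eval.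
Qed.

Lemma evalZe (w : {set 'I_n} -> R) (v : 'I_n -> R) (e : 'I_n) : v e = 1 ->
  ((Zpoly w)^`M(e)).@[v] = \sum_(S : {set 'I_n}) (if e \in S then w S * P v S else 0).
Proof.
move=> ve; rewrite /Zpoly (big_morph _ (@mderivD _ _ e) (@mderiv0 _ _ e)) (big_morph _ (@mevalD _ _ v) (@meval0 _ _ v)); apply: eq_bigr => S _.
rewrite mderivZ mevalZ -/(mon S); case: (boolP (e \in S)) => h.
  by rewrite mon_deriv // mon_eval /P (big_setD1 _ h) /= ve mul1r.
by rewrite mon_deriv0 // meval0 mulr0.
Qed.

Lemma evalZef (w : {set 'I_n} -> R) (v : 'I_n -> R) (e f : 'I_n) : e != f -> v e = 1 -> v f = 1 ->
  (((Zpoly w)^`M(e))^`M(f)).@[v] =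
  \sum_(S : {set 'I_n}) (if (e \in S) && (f \in S) then w S * P v S else 0).
Proof.
move=> ef ve vf; rewrite /Zpoly (big_morph _ (@mderivD _ _ e) (@mderiv0 _ _ e)) (big_morph _ (@mderivD _ _ f) (@mderiv0 _ _ f)) (big_morph _ (@mevalD _ _ v) (@meval0 _ _ v)); apply: eq_bigr => S _.
rewrite !mderivZ mevalZ -/(mon S); case: (boolP (e \in S)) => h /=.
  rewrite mon_deriv //; case: (boolP (f \in S)) => h2.
    have h3 : f \in S :\ e by rewrite !inE h2 eq_sym ef.
    rewrite mon_deriv // mon_eval /P (big_setD1 _ h) /= ve mul1r.
    by rewrite (big_setD1 _ h3) /= vf mul1r.
  by rewrite mon_deriv0 ?meval0 ?mulr0 // !inE negb_and h2 orbT.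
by rewrite mon_deriv0 // mderiv0 meval0 mulr0.
Qed.

Lemma prod_if (M : R) (A U : {set 'I_n}) :
  \prod_(j in U) (if j \in A then M else 1) = M ^+ #|U :&: A|.
Proof.
rewrite -big_mkcondr /= -prodr_const; apply: eq_bigl => j; by rewrite inE.
Qed.

Variables (Q : {set {set 'I_n}}) (w : {set 'I_n} -> R).
Hypothesis Hw : forall S, 0 <= w S.
Hypothesis HQ : forall S, 0 < w S <-> S \in Q.
Hypothesis Hr : rayleigh (Zpoly w).

Lemma key (Sa Sb : {set 'I_n}) (e f : 'I_n) : Sa \in Q -> Sb \in Q -> Sa \subset Sb ->
  e \in Sb -> e \notin Sa -> f \in Sb -> f \notin Sa -> e != f ->
  exists U, [/\ U \in Q, Sa \subset U, U \subset Sb, e \in U & f \notin U].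
Proof.
move=> QSa QSb sab eb ea fb fa ef.
case: (boolP [exists U : {set 'I_n},
   [&& U \in Q, Sa \subset U, U \subset Sb, e \in U & f \notin U]]).
  by case/existsP => U /and5P [*]; exists U.
move/existsPn => noU; exfalso.
have wa : 0 < w Sa by apply/HQ.
have wb : 0 < w Sb by apply/HQ.
set W := \sum_(S : {set 'I_n}) w S.
set c := w Sa * w Sb.
have c0 : 0 < c by rewrite mulr_gt0.
set M := W ^+ 2 / c + 1.
have M1 : 1 <= M by rewrite /M lerDr divr_ge0 // ?sqr_ge0 ?ltW.
have M0 : 0 < M by apply: lt_le_trans ltr01 M1.
pose y := fun j : 'I_n => if j \in Sa then M else if j \in Sb then 1 else M^-1.
have ypos : forall i, 0 < y i.
  by move=> i; rewrite /y; case: ifP => _ //; case: ifP => _ //; rewrite invr_gt0.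
have ye : y e = 1 by rewrite /y (negbTE ea) eb.
have yf : y f = 1 by rewrite /y (negbTE fa) fb.
set k := #|Sa|.
set B := M ^+ k.
have B0 : 0 < B by rewrite exprn_gt0.
have yle : forall j, 0 <= y j <= (if j \in Sa then M else 1).
  move=> j; rewrite (ltW (ypos j)) /= /y; case: ifP => // _; case: ifP => // _.
  by rewrite invf_le1.
have Pbnd : forall U, P y U <= M ^+ #|U :&: Sa|.
  by move=> U; rewrite /P -prod_if; apply: ler_prod => j _; exact: yle.
have PleB : forall U, P y U <= B.
  move=> U; apply: le_trans (Pbnd U) _; apply: ler_weXn2l => //.
  by apply: subset_leq_card; exact: subsetIr.
have Pge0 : forall U, 0 <= P y U.
  by move=> U; apply: prodr_ge0 => j _; exact: ltW.
have Psmall : forall U : {set 'I_n}, ~~ ((Sa \subset U) && (U \subset Sb)) -> P y U <= B / M.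
  move=> U; rewrite negb_and => /orP [nSa|nSb].
  - apply: le_trans (Pbnd U) _; rewrite ler_pdivlMr // -exprSr.
    apply: ler_weXn2l => //; apply: proper_card; rewrite properE subsetIr /=.
    by apply: contra nSa => h; apply: subset_trans h (subsetIl U Sa).
  - case/subsetPn: nSb => j jU jSb.
    have yj : y j = M^-1.
      rewrite /y (negbTE jSb); case: ifP => // h.
      by move: jSb; rewrite (subsetP sab _ h).
    rewrite /P (big_setD1 _ jU) /= yj mulrC; apply: ler_wpM2r.
      by rewrite invr_ge0 ltW.
    exact: (PleB (U :\ j)).
have PSb : P y Sb = B.
  rewrite /P (eq_bigr (fun j => if j \in Sa then M else 1)); last first.
    by move=> j jSb; rewrite /y; case: ifP => // _; rewrite jSb.
  by rewrite prod_if (setIidPr sab).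
have PSa : P y Sa = B.
  rewrite /P (eq_bigr (fun j => if j \in Sa then M else 1)); last first.
    by move=> j jSa; rewrite /y jSa.
  by rewrite prod_if setIid.
have := Hr ef ypos.
rewrite (evalZe _ ye) (evalZe _ yf) (evalZef _ ef ye yf) evalZ.
pose h b1 b2 := \sum_(S : {set 'I_n})
   (if ((e \in S) == b1) && ((f \in S) == b2) then w S * P y S else 0).
have E1 : \sum_(S : {set 'I_n}) (if e \in S then w S * P y S else 0) = h true true + h true false.
  by rewrite -big_split; apply: eq_bigr => S _; case: (e \in S); case: (f \in S); rewrite /= ?addr0 ?add0r.
have E2 : \sum_(S : {set 'I_n}) (if f \in S then w S * P y S else 0) = h true true + h false true.
  by rewrite -big_split; apply: eq_bigr => S _; case: (e \in S); case: (f \in S); rewrite /= ?addr0 ?add0r.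
have E3 : \sum_(S : {set 'I_n}) (if (e \in S) && (f \in S) then w S * P y S else 0) = h true true.
  by apply: eq_bigr => S _; case: (e \in S); case: (f \in S).
have E4 : \sum_(S : {set 'I_n}) w S * P y S = h true true + h true false + h false true + h false false.
  by rewrite -!big_split; apply: eq_bigr => S _; case: (e \in S); case: (f \in S); rewrite /= ?addr0 ?add0r.
rewrite E1 E2 E3 E4.
have -> : (h true true + h true false) * (h true true + h false true) -
    h true true * (h true true + h true false + h false true + h false false) =
    h true false * h false true - h true true * h false false by ring.
have a0 : forall S, 0 <= w S * P y S by move=> S; rewrite mulr_ge0.
have h0 : forall b1 b2, 0 <= h b1 b2.
  by move=> b1 b2; apply: sumr_ge0 => S _; case: ifP.
have ub1 : h true false <= W * (B / M).
  rewrite /W mulr_suml; apply: ler_sum => S _; case: ifP => [/andP [/eqP eS /eqP fS] | _]; last first.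
    by rewrite mulr_ge0 // divr_ge0 // ltW.
  have := noU S; rewrite eS fS /= andbT => H.
  case: (boolP (S \in Q)) => SQ.
    by rewrite SQ /= in H; rewrite ler_wpM2l // Psmall.
  have wS0 : w S = 0.
    apply/eqP; rewrite eq_le Hw andbT leNgt; apply/negP => /HQ.
    by rewrite (negbTE SQ).
  by rewrite wS0 !mul0r.
have ub2 : h false true <= W * B.
  rewrite /W mulr_suml; apply: ler_sum => S _; case: ifP => _.
    by rewrite ler_wpM2l.
  by rewrite mulr_ge0 // ltW.
have lb1 : w Sb * B <= h true true.
  rewrite /h (bigD1 Sb) //= eb fb /= PSb lerDl.
  by apply: sumr_ge0 => S _; case: ifP.
have lb2 : w Sa * B <= h false false.
  rewrite /h (bigD1 Sa) //= (negbTE ea) (negbTE fa) /= PSa lerDl.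
  by apply: sumr_ge0 => S _; case: ifP.
move=> Hray.
have up : h true false * h false true <= (W * (B / M)) * (W * B).
  by apply: ler_pM.
have lo : (w Sb * B) * (w Sa * B) <= h true true * h false false.
  by apply: ler_pM => //; rewrite mulr_ge0 // ltW.
have H1 : (w Sb * B) * (w Sa * B) <= (W * (B / M)) * (W * B).
  apply: le_trans lo _; apply: le_trans up; by rewrite -subr_ge0.
set K := B * B.
have K0 : 0 < K by rewrite mulr_gt0.
have H2 : c * K * M <= W ^+ 2 * K.
  have -> : W ^+ 2 * K = (W * (B / M)) * (W * B) * M.
    rewrite /K; field; exact: lt0r_neq0.
  rewrite ler_pM2r //; apply: le_trans H1; rewrite /c /K.
  by rewrite le_eqVlt; apply/orP; left; apply/eqP; ring.
have H3 : c * K * M = W ^+ 2 * K + c * K.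
  rewrite /M; field; exact: lt0r_neq0.
move: H2; rewrite H3 gerDl leNgt => /negP; apply.
by rewrite mulr_gt0.
Qed.

Lemma main (N : nat) : forall (Sa Sb T : {set 'I_n}), (#|Sb :\: Sa| <= N)%N ->
  Sa \in Q -> Sb \in Q -> Sa \subset T -> T \subset Sb -> T \in Q.
Proof.
elim: N => [|N IH] Sa Sb T hN QSa QSb sa_t t_sb.
  have : Sb :\: Sa == set0 by rewrite -cards_eq0 -leqn0.
  rewrite setD_eq0 => sb_sa.
  have -> : T = Sa by apply/eqP; rewrite eqEsubset sa_t (subset_trans t_sb sb_sa).
  done.
case: (eqVneq T Sa) => [->//|tna].
case: (eqVneq T Sb) => [->//|tnb].
have : ~~ (T \subset Sa) by apply: contra tna => hh; rewrite eqEsubset hh sa_t.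
case/subsetPn => e eT eSa.
have : ~~ (Sb \subset T) by apply: contra tnb => hh; rewrite eqEsubset hh t_sb.
case/subsetPn => f fSb fT.
have eSb : e \in Sb := subsetP t_sb e eT.
have fSa : f \notin Sa by apply: contra fT; exact: subsetP sa_t f.
have ef : e != f by apply/eqP => hh; move: fT; rewrite -hh eT.
have [U [QU sU Us eU fU]] := key QSa QSb (subset_trans sa_t t_sb) eSb eSa fSb fSa ef.
have ltU : (#|U :\: Sa| < #|Sb :\: Sa|)%N.
  apply: proper_card; rewrite properE (setSD _ Us) /=; apply/subsetPn; exists f.
    by rewrite !inE fSa fSb.
  by rewrite !inE (negbTE fU) andbF.
have Qe : (e |: Sa) \in Q.
  apply: (IH Sa U) => //.
  - by rewrite -ltnS; apply: leq_trans ltU hN.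
  - exact: subsetUr.
  - by rewrite subUset sub1set eU sU.
apply: (IH (e |: Sa) Sb) => //.
- rewrite -ltnS; apply: leq_trans _ hN; apply: proper_card.
  rewrite properE setDS ?subsetUr //=; apply/subsetPn; exists e.
    by rewrite !inE eSa eSb.
  by rewrite !inE eqxx.
- by rewrite subUset sub1set eT sa_t.
Qed.

End Aux.

Theorem corollary4p3 (R : realType) (n : nat) (Q : {set {set 'I_n}}) :
  weakly_rayleigh R Q -> convex_system Q.
Proof.
move=> [w [Hw [_ [HQ Hr]]]] S T S' QS QS' sST sTS'.
exact: (main Hw HQ Hr (leqnn _) QS QS' sST sTS').
Qed.
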